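(* Let $X=(v_j)_{j=1}^n$ be a sequence of unit vectors in $\mathbb{C}^d$ whose angles have real parts taking at most $s$ possible values (this includes designs with $2s$ angles, none of which is real). Then $$n=|X|\le\sum_{p+q\le s}\dim H(p,q)=\binom{s+2d-1}{2d-1}+\binom{s+2d-2}{2d-1}.$$
   Context: $\langle z,w\rangle=\sum_iz_i\overline{w_i}$. The angles of $X$ are the inner products $\langle v_j,v_k\rangle$ with $v_j\ne v_k$ (complex numbers $z$ with $|z|\le1$, $z\ne1$). $H(p,q)$ is the space of harmonic polynomials on $\mathbb{C}^d=\mathbb{R}^{2d}$ homogeneous of degree $p$ in $z_1,\ldots,z_d$ and of degree $q$ in $\overline{z_1},\ldots,\overline{z_d}$. *)

(* Defs.v *)
From mathcomp Require Import all_boot all_order all_algebra.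
From mathcomp Require Import complex.
From mathcomp Require Import reals.
Set Implicit Arguments. Unset Strict Implicit. Unset Printing Implicit Defensive.
Import Order.TTheory GRing.Theory Num.Theory.
Local Open Scope ring_scope.

Definition cinner (R : realType) (d : nat) (z w : 'I_d -> R[i]) : R[i] :=
  \sum_(i < d) z i * conjc (w i).

Definition unit_vec (R : realType) (d : nat) (v : 'I_d -> R[i]) : Prop :=
  cinner v v = 1.

Definition angles_real_parts_at_most (R : realType) (d n s : nat)
  (X : 'I_n -> ('I_d -> R[i])) : Prop :=
  exists A : seq R, (size A <= s)%N /\
    forall j k : 'I_n, X j <> X k -> complex.Re (cinner (X j) (X k)) \in A.

(* Main.v *)
Require Import Defs.
From mathcomp Require Import all_boot all_order all_algebra.
From mathcomp Require Import complex reals.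
From mathcomp Require Import ring.
Set Implicit Arguments. Unset Strict Implicit. Unset Printing Implicit Defensive.
Import Order.TTheory GRing.Theory Num.Theory.
Local Open Scope ring_scope.

Definition dot (R : realType) M (x y : 'I_M -> R) := \sum_i x i * y i.
Definition sph (R : realType) M (x : 'I_M -> R) := dot x x = 1.
Definition mono (R : realType) M k (t : k.-tuple 'I_M) (x : 'I_M -> R) :=
  \prod_(i <- t) x i.
Definition Hom (R : realType) M k (f : ('I_M -> R) -> R) :=
  exists r : seq (R * k.-tuple 'I_M),
    forall x, sph x -> f x = \sum_(p <- r) p.1 * mono p.2 x.

Lemma Hom_ext (R : realType) M k (f g : ('I_M -> R) -> R) :
  Hom k f -> (forall x, sph x -> f x = g x) -> Hom k g.
Proof. by move=> [r Hr] fg; exists r => x sx; rewrite -fg // Hr. Qed.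

Lemma Hom0 (R : realType) M k : Hom k (fun _ : 'I_M -> R => 0).
Proof. by exists [::] => x _; rewrite big_nil. Qed.

Lemma HomD (R : realType) M k (f g : ('I_M -> R) -> R) :
  Hom k f -> Hom k g -> Hom k (fun x => f x + g x).
Proof.
by move=> [r1 H1] [r2 H2]; exists (r1 ++ r2) => x sx; rewrite big_cat H1 ?H2.
Qed.

Lemma HomZ (R : realType) M k (c : R) (f : ('I_M -> R) -> R) :
  Hom k f -> Hom k (fun x => c * f x).
Proof.
move=> [r H]; exists [seq (c * p.1, p.2) | p <- r] => x sx.
by rewrite big_map H // mulr_sumr; apply: eq_bigr => p _ /=; rewrite mulrA.
Qed.

Lemma Hom_mono (R : realType) M k (t : k.-tuple 'I_M) :
  Hom k (fun x : 'I_M -> R => mono t x).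
Proof. by exists [:: (1, t)] => x _; rewrite big_seq1 mul1r. Qed.

Lemma Hom_sum (R : realType) M k (I : Type) (s : seq I) (F : I -> ('I_M -> R) -> R) :
  (forall i, Hom k (F i)) -> Hom k (fun x => \sum_(i <- s) F i x).
Proof.
move=> H; elim: s => [|i s IH].
  by apply: Hom_ext (Hom0 R M k) _ => x _; rewrite big_nil.
by apply: Hom_ext (HomD (H i) IH) _ => x _; rewrite big_cons.
Qed.

Lemma Hom_trans (R : realType) M k k' (G : ('I_M -> R) -> R) (f : ('I_M -> R) -> R) :
  (forall t : k.-tuple 'I_M, Hom k' (fun x => G x * mono t x)) ->
  Hom k f -> Hom k' (fun x => G x * f x).
Proof.
move=> HG [r Hr].
have : Hom k' (fun x => \sum_(p <- r) p.1 * (G x * mono p.2 x)).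
  by apply: Hom_sum => p; apply: HomZ.
move/Hom_ext; apply => x sx; rewrite Hr // mulr_sumr; apply: eq_bigr => p _.
by rewrite mulrCA.
Qed.

Lemma Hom_up (R : realType) M k (f : ('I_M -> R) -> R) :
  Hom k f -> Hom k.+2 f.
Proof.
move=> Hf; have : Hom k.+2 (fun x => 1 * f x).
  apply: Hom_trans Hf => t.
  have : Hom k.+2 (fun x : 'I_M -> R => \sum_(i <- index_enum 'I_M) mono [tuple of i :: i :: t] x).
    by apply: Hom_sum => i; apply: Hom_mono.
  move/Hom_ext; apply => x sx; rewrite mul1r.
  have -> : \sum_(i <- index_enum 'I_M) mono [tuple of i :: i :: t] x = dot x x * mono t x.
    by rewrite /dot mulr_suml; apply: eq_bigr => i _; rewrite /mono /= !big_cons mulrA.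
  by rewrite sx mul1r.
by move/Hom_ext; apply => x _; rewrite mul1r.
Qed.

Lemma Hom_lin (R : realType) M k (q : 'I_M -> R) (f : ('I_M -> R) -> R) :
  Hom k f -> Hom k.+1 (fun x => dot x q * f x).
Proof.
move=> Hf; apply: Hom_trans Hf => t.
have : Hom k.+1 (fun x : 'I_M -> R => \sum_(i <- index_enum 'I_M) q i * mono [tuple of i :: t] x).
  by apply: Hom_sum => i; apply: HomZ; apply: Hom_mono.
move/Hom_ext; apply => x sx.
rewrite /dot mulr_suml /=; apply: eq_bigr => i _.
by rewrite /mono /= !big_cons; ring.
Qed.

Definition Rep (R : realType) M k (f : ('I_M -> R) -> R) :=
  exists g h, [/\ Hom k g, Hom k.-1 h & forall x, sph x -> f x = g x + h x].

Lemma Rep_ext (R : realType) M k (f f' : ('I_M -> R) -> R) :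
  Rep k f -> (forall x, sph x -> f x = f' x) -> Rep k f'.
Proof.
by move=> [g [h [Hg Hh E]]] ff; exists g, h; split => // x sx; rewrite -ff ?E.
Qed.

Lemma Rep_one (R : realType) M : Rep 0 (fun _ : 'I_M -> R => 1).
Proof.
exists (fun _ => 1), (fun _ => 0); split.
- exists [:: (1, [tuple])] => x _; rewrite big_seq1 /mono /= big_nil mulr1 //.
- exact: Hom0.
- by move=> x _; rewrite addr0.
Qed.

Lemma Rep_mul (R : realType) M k (q : 'I_M -> R) (a : R) (f : ('I_M -> R) -> R) :
  Rep k f -> Rep k.+1 (fun x => (dot x q - a) * f x).
Proof.
move=> [g [h [Hg Hh E]]]; case: k Hg Hh => [|k] Hg Hh /=.
- exists (fun x => dot x q * g x + dot x q * h x), (fun x => (- a) * g x + (- a) * h x).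
  split.
  + by apply: HomD; apply: Hom_lin.
  + by apply: HomD; apply: HomZ.
  + by move=> x sx; rewrite E //; ring.
- exists (fun x => dot x q * g x + (- a) * h x), (fun x => dot x q * h x + (- a) * g x).
  split.
  + by apply: HomD; [apply: Hom_lin | apply: Hom_up; apply: HomZ].
  + by apply: HomD; [apply: Hom_lin | apply: HomZ].
  + by move=> x sx; rewrite E //; ring.
Qed.

Lemma Rep_up (R : realType) M k (f : ('I_M -> R) -> R) :
  Rep k f -> Rep k.+1 f.
Proof.
move=> [g [h [Hg Hh E]]]; case: k Hg Hh => [|k] Hg Hh /=.
- exists (fun _ => 0), (fun x => g x + h x); split.
  + exact: Hom0.
  + exact: HomD.
  + by move=> x sx; rewrite E // add0r.
- exists h, g; split => //.
  + exact: Hom_up.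
  + by move=> x sx; rewrite E // addrC.
Qed.

Lemma Rep_le (R : realType) M k k' (f : ('I_M -> R) -> R) :
  (k <= k')%N -> Rep k f -> Rep k' f.
Proof.
elim: k' => [|k' IH]; first by rewrite leqn0 => /eqP ->.
rewrite leq_eqVlt => /orP [/eqP -> //|/IH H] /H; exact: Rep_up.
Qed.

Lemma Rep_prod (R : realType) M k (q : 'I_M -> R) (B : seq R) :
  (size B <= k)%N -> Rep k (fun x => \prod_(a <- B) (dot x q - a)).
Proof.
move=> HB; apply: Rep_le HB _; elim: B => [|a B IH] /=.
  by apply: Rep_ext (Rep_one R M) _ => x _; rewrite big_nil.
by apply: Rep_ext (Rep_mul q a IH) _ => x _; rewrite big_cons.
Qed.

Definition Srt M k := {t : k.-tuple 'I_M | sorted leq (map val t)}.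

Definition ordle M := fun i j : 'I_M => (i <= j)%N.

Lemma srt_proof M k (t : k.-tuple 'I_M) : sorted leq (map val (sort_tuple (@ordle M) t)).
Proof.
rewrite sorted_map; apply: sort_sorted => i j; exact: leq_total.
Qed.

Definition srt M k (t : k.-tuple 'I_M) : Srt M k :=
  exist (fun u : k.-tuple 'I_M => sorted leq (map val u)) _ (srt_proof t).

Lemma mono_srt (R : realType) M k (t : k.-tuple 'I_M) (x : 'I_M -> R) :
  mono (val (srt t)) x = mono t x.
Proof. by rewrite /mono /=; apply: perm_big; rewrite perm_sort. Qed.

Lemma Hom_sorted (R : realType) M k (f : ('I_M -> R) -> R) :
  Hom k f -> exists c : Srt M k -> R,
    forall x, sph x -> f x = \sum_(u : Srt M k) c u * mono (val u) x.
Proof.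
move=> [r Hr]; exists (fun u => \sum_(p <- r | srt p.2 == u) p.1) => x sx.
rewrite Hr //; under [RHS]eq_bigr do rewrite mulr_suml.
rewrite (exchange_big_dep xpredT) //=; apply: eq_bigr => p _.
rewrite (big_pred1 (srt p.2)) ?mono_srt // => u /=; exact: eq_sym.
Qed.

Lemma rank_bound (R : fieldType) (I : finType) n (C : 'I_n -> I -> R)
  (G : I -> 'I_n -> R) :
  (forall j k, \sum_u C j u * G u k = (j == k)%:R) -> (n <= #|I|)%N.
Proof.
move=> H.
pose A := \matrix_(j < n, i < #|I|) C j (enum_val i).
pose B := \matrix_(i < #|I|, k < n) G (enum_val i) k.
have AB : A *m B = 1%:M.
  apply/matrixP => j k; rewrite !mxE -H.
  rewrite [RHS](reindex (@enum_val I predT)) /=; last first.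
    by apply: onW_bij; apply: enum_val_bij.
  by apply: eq_bigr => u _; rewrite !mxE.
by rewrite -[X in (X <= _)%N](mxrank1 R n) -AB (leq_trans (mxrankM_maxr _ _)) // rank_leq_row.
Qed.

From Stdlib Require Import ClassicalEpsilon.

Lemma real_bound (R : realType) M n s (p : 'I_n -> ('I_M -> R)) (A : seq R) :
  (forall j, sph (p j)) ->
  (forall j k, j != k -> dot (p k) (p j) \in A) ->
  (forall j k, j != k -> dot (p k) (p j) != 1) ->
  (size A <= s)%N ->
  (n <= #|{: Srt M s}| + #|{: Srt M s.-1}|)%N.
Proof.
move=> Hs HA H1 HsA.
pose A' := [seq a <- A | a != 1].
pose f j x := \prod_(a <- A') (dot x (p j) - a).
have Hf j : Rep s (f j).
  apply: Rep_prod; apply: leq_trans HsA; rewrite size_filter; exact: count_size.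
have Hc j : exists cc : (Srt M s -> R) * (Srt M s.-1 -> R),
    forall x, sph x -> f j x = \sum_u cc.1 u * mono (val u) x
                              + \sum_u cc.2 u * mono (val u) x.
  have [g [h [Hg Hh E]]] := Hf j.
  have [c1 E1] := Hom_sorted Hg; have [c2 E2] := Hom_sorted Hh.
  by exists (c1, c2) => x sx /=; rewrite E // E1 // E2.
pose cc j := proj1_sig (constructive_indefinite_description _ (Hc j)).
have Ecc j : forall x, sph x -> f j x = \sum_u (cc j).1 u * mono (val u) x
                              + \sum_u (cc j).2 u * mono (val u) x.
  exact: (proj2_sig (constructive_indefinite_description _ (Hc j))).
pose c := (\prod_(a <- A') (1 - a))^-1.
pose C j (u : (Srt M s + Srt M s.-1)%type) :=
  match u with inl u => c * (cc j).1 u | inr u => c * (cc j).2 u end.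
pose G (u : (Srt M s + Srt M s.-1)%type) k :=
  match u with inl u => mono (val u) (p k) | inr u => mono (val u) (p k) end.
have := @rank_bound R _ n C G; rewrite card_sum; apply => j k.
rewrite big_sumType /=; under eq_bigr do rewrite -mulrA; under [X in _ + X = _]eq_bigr do rewrite -mulrA.
rewrite -!mulr_sumr -mulrDr -Ecc //.
have [<-|jk] := eqVneq j k.
  rewrite /f (Hs j) /c mulVf //; rewrite prodf_seq_neq0; apply/allP => a.
  by rewrite mem_filter subr_eq0 eq_sym => /andP [].
rewrite /f; apply/eqP; rewrite mulf_eq0; apply/orP; right.
rewrite prodf_seq_eq0; apply/hasP; exists (dot (p k) (p j)) => //.
  by rewrite mem_filter H1 ?HA.
by rewrite /= subrr.
Qed.

Lemma card_Srt N k : #|{: Srt N.+1 k}| = 'C(k + N, k).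
Proof. by rewrite card_sig -card_sorted_tuples cardsE. Qed.

Definition coord (R : realType) d (z : 'I_d -> R[i]) : 'I_(d + d) -> R :=
  fun i => match split i with inl j => complex.Re (z j) | inr j => complex.Im (z j) end.

Lemma coordL (R : realType) d (z : 'I_d -> R[i]) j : coord z (lshift d j) = complex.Re (z j).
Proof. by rewrite /coord (unsplitK (inl _ j)). Qed.

Lemma coordR (R : realType) d (z : 'I_d -> R[i]) j : coord z (rshift d j) = complex.Im (z j).
Proof. by rewrite /coord (unsplitK (inr _ j)). Qed.

Lemma ReSum (R : realType) d (F : 'I_d -> R[i]) : complex.Re (\sum_j F j) = \sum_j complex.Re (F j).
Proof.
apply: (big_ind2 (fun a b => complex.Re a = b)) => //.
by move=> [a b] x [c e] y /= <- <-.
Qed.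

Lemma dot_coord (R : realType) d (z w : 'I_d -> R[i]) :
  dot (coord z) (coord w) = complex.Re (cinner z w).
Proof.
rewrite /dot big_split_ord /= /cinner ReSum -big_split /=; apply: eq_bigr => j _.
rewrite !coordL !coordR; case: (z j) => a b; case: (w j) => c e /=; ring.
Qed.

Lemma dot_eq1 (R : realType) M (x y : 'I_M -> R) :
  sph x -> sph y -> dot x y = 1 -> forall i, x i = y i.
Proof.
move=> sx sy Hxy.
have E : \sum_i (x i - y i) ^+ 2 = 0.
  transitivity (dot x x + dot y y - (dot x y) *+ 2).
    rewrite /dot -big_split /= -sumrMnl -sumrB /=; apply: eq_bigr => i _; ring.
  rewrite sx sy Hxy; ring.
move=> i; apply/eqP; rewrite -subr_eq0 -sqrf_eq0; apply/eqP.
by apply: (psumr_eq0P _ E) => // j _; exact: sqr_ge0.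
Qed.

From Stdlib Require Import FunctionalExtensionality.

Lemma dot_C (R : realType) M (x y : 'I_M -> R) : dot x y = dot y x.
Proof. by apply: eq_bigr => i _; rewrite mulrC. Qed.

Theorem theorem10p5 (R : realType) (d n s : nat)
  (X : 'I_n -> ('I_d -> R[i]))
  (Xinj : injective X)
  (Xunit : forall j, unit_vec (X j))
  (Xang : angles_real_parts_at_most s X) :
  (n <= 'C(s + 2 * d - 1, 2 * d - 1) + 'C(s + 2 * d - 2, 2 * d - 1))%N.
Proof.
case: d X Xinj Xunit Xang => [|d] X Xinj Xunit Xang.
  case: n X Xinj Xunit Xang => // n X _ Xunit _.
  by have := Xunit ord0; rewrite /unit_vec /cinner big_ord0 => /eqP; rewrite eq_sym oner_eq0.
have [A [sA HA]] := Xang.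
have Hne j k : j != k -> X j <> X k by move=> jk /Xinj /eqP; rewrite (negbTE jk).
case: s sA Xang => [|s] sA Xang.
  move: sA; rewrite leqn0 size_eq0 => /eqP HA0; subst A.
  case: n X Xinj Xunit Xang HA Hne => [|[|n]] X Xinj Xunit Xang HA Hne //.
    by rewrite add0n mul2n -addnn addSn subSS subn0 binn.
  have := HA ord0 ord_max (Hne ord0 ord_max isT).
  by rewrite in_nil.
pose p j := coord (X j).
have Hs j : sph (p j) by rewrite /sph /p dot_coord (Xunit j).
have HA' j k : j != k -> dot (p k) (p j) \in A.
  by move=> jk; rewrite /p dot_coord; apply: HA; apply: Hne; rewrite eq_sym.
have H1 j k : j != k -> dot (p k) (p j) != 1.
  move=> jk; apply/negP => /eqP E; apply: (Hne _ _ jk).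
  have E' := dot_eq1 (Hs j) (Hs k) (etrans (esym (dot_C _ _)) E).
  apply: functional_extensionality => i; have := E' (lshift _ i); have := E' (rshift _ i).
  rewrite /p !coordL !coordR; case: (X j i) => a b; case: (X k i) => c e /= -> -> //.
have := real_bound Hs HA' H1 sA.
have -> : (d.+1 + d.+1 = (d + d.+1).+1)%N by [].
rewrite !card_Srt /=.
have -> : (2 * d.+1 - 1 = d + d.+1)%N by rewrite mul2n -addnn addSn subSS subn0.
have -> : (s.+1 + 2 * d.+1 - 2 = s + (d + d.+1))%N.
  by rewrite mul2n -addnn !addSn addnS !subSS subn0 addnA.
have -> : (s.+1 + 2 * d.+1 - 1 = s.+1 + (d + d.+1))%N.
  by rewrite mul2n -addnn !addSn addnS !subSS subn0 addnA.
rewrite -(bin_sub (leq_addl s.+1 (d + d.+1))) addnK.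
by rewrite -(bin_sub (leq_addl s (d + d.+1))) addnK.
Qed.
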